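(* Let $b\ge1$ and let $G$ be an extended gadget of type II with vertices $p,q,r$ and directed paths $P_1,P_2$ as in its definition. Then: (1) for every $x\in V(G)\setminus\{p,q\}$ there exist $a\in\{1,2\}$ and an $(a,b)$-alternating-path $R$ contained in $G$ with $t_a(R)=x$, $s_1(R)\in\{p,q\}$ and $|V(R)\cap\{p,q\}|=1$; (2) for every non-empty set $X\subseteq V(P_1)\setminus\{p,r\}$ there exist $a\in\{1,2\}$ and an $(a,b)$-alternating-path $R$ contained in $G$ with $t_a(R)\in X$, $s_1(R)\in\{p,q\}$ and $|V(R)\cap\{p,q\}|=|V(R)\cap X|=1$.
   Context: Fix an integer $b\ge1$. A basic gadget of type II is a digraph consisting of vertices $p,q,r$ and a directed path $P_1$ from $r$ to $p$ of length at least $2b^2+b-2$ with $q\notin V(P_1)$, such that every vertex of $P_1$ has an arc to $q$. An extended gadget of type II consists of such a basic gadget together with a directed path $P_2$ of length at least $b$ whose last vertex is $r$, with $V(P_1)\cap V(P_2)=\{r\}$, $q\notin V(P_2)$, and such that either there is an arc from the first vertex of $P_2$ to the second vertex of $P_1$, or there is an arc from some vertex of $V(P_1)\setminus\{r\}$ to the first vertex of $P_2$. For integers $a,b\ge1$, an $(a,b)$-alternating-path is an oriented path $R$ consisting of vertices $s_1,\dots,s_a,t_1,\dots,t_a$ and pairwise internally vertex-disjoint directed paths $Q_1,\dots,Q_a,Q'_1,\dots,Q'_{a-1}$, where $Q_i$ goes from $s_i$ to $t_i$, $Q'_i$ goes from $s_{i+1}$ to $t_i$, and $Q_2,\dots,Q_{a-1},Q'_1,\dots,Q'_{a-1}$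 each have length at least $b$ ($Q_1$, $Q_a$ may have length zero). We write $s_i(R),t_i(R)$ for its vertices. *)

(* Defs.v *)
From mathcomp Require Import all_boot.
Set Implicit Arguments. Unset Strict Implicit. Unset Printing Implicit Defensive.

Section Digraphs.
Variable V : finType.

Definition seq_arcs (s : seq V) : rel V :=
  fun x y => (x, y) \in zip s (behead s).

Definition dpath_in (A : rel V) (u v : V) (s : seq V) : bool :=
  match s with
  | [::] => false
  | x :: s' => [&& x == u, path A x s', last x s' == v & uniq s]
  end.

Definition dlength (s : seq V) : nat := (size s).-1.

Definition dpath_ft (u v : V) (s : seq V) : bool := dpath_in (seq_arcs s) u v s.

(* The gadget G is determined by p q r P1 P2 and the set [ex] of "extra"
   arcs (nonempty, each of one of the two allowed kinds).                      *)
Definition gadgetV (q : V) (P1 P2 : seq V) : pred V :=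
  fun v => [|| v \in P1, v \in P2 | v == q].

Definition gadgetA (q : V) (P1 P2 : seq V) (ex : rel V) : rel V :=
  fun x y => [|| seq_arcs P1 x y, seq_arcs P2 x y, (x \in P1) && (y == q)
              | ex x y].

Definition basic_gadget_II (b : nat) (p q r : V) (P1 : seq V) : Prop :=
  [/\ dpath_ft r p P1, 2 * b ^ 2 + b - 2 <= dlength P1 & q \notin P1].

Definition ext_gadget_II (b : nat) (p q r : V) (P1 P2 : seq V) (ex : rel V)
  : Prop :=
  [/\ basic_gadget_II b p q r P1,
      (exists2 f, dpath_ft f r P2 & b <= dlength P2),
      [predI P1 & P2] =i pred1 r,
      q \notin P2 &
      ((exists x y, ex x y) /\
       (forall x y, ex x y ->
        (x = head r P2 /\ y = nth r P1 1) \/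
        ((x \in P1) /\ x <> r /\ y = head r P2)))].

(* R is given by its vertices s_i, t_i and paths Q_i (from s_i to t_i) and
   Q'_i (from s_(i+1) to t_i).  Its vertex sequence, traversed as an
   oriented path s_1 Q_1 t_1 Q'_1^- s_2 Q_2 t_2 ... t_a, is alt_walk. *)
Definition alt_walk (a : nat) (Q Q' : nat -> seq V) : seq V :=
  Q 1 ++ flatten [seq behead (rev (Q' i)) ++ behead (Q i.+1) | i <- iota 1 a.-1].

Definition alt_path_in (VG : pred V) (A : rel V) (a b : nat)
  (s t : nat -> V) (Q Q' : nat -> seq V) : Prop :=
  [/\ 1 <= a,
      (forall i, 1 <= i <= a -> dpath_in A (s i) (t i) (Q i)),
      (forall i, 1 <= i < a -> dpath_in A (s i.+1) (t i) (Q' i)),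
      (forall i, 2 <= i < a -> b <= dlength (Q i)) /\
      (forall i, 1 <= i < a -> b <= dlength (Q' i)) &
      (* R is an oriented path: all its vertices are distinct
         (this gives pairwise internal vertex-disjointness) *)
      uniq (alt_walk a Q Q') &&
      all VG (alt_walk a Q Q')].

End Digraphs.

(* Main.v *)
Require Import Defs.
From mathcomp Require Import all_boot zify.
Set Implicit Arguments. Unset Strict Implicit. Unset Printing Implicit Defensive.


Lemma arcs_head {V : finType} (x y : V) l : seq_arcs (x :: y :: l) x y.
Proof. by rewrite /seq_arcs /= mem_head. Qed.

Lemma arcs_cons {V : finType} (z : V) s u v : seq_arcs s u v -> seq_arcs (z :: s) u v.
Proof.
rewrite /seq_arcs; case: s => [//|w s] /= H.
by rewrite in_cons H orbT.
Qed.

Lemma arcs_catl {V : finType} (l1 s : seq V) u v : seq_arcs s u v -> seq_arcs (l1 ++ s) u v.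
Proof. elim: l1 => [//|z l1 IH] /= H; exact/arcs_cons/IH. Qed.

Lemma arcs_sub {V : finType} (l1 l2 : seq V) x m : path (seq_arcs (l1 ++ x :: m ++ l2)) x m.
Proof.
apply: (@sub_path _ (seq_arcs (x :: m ++ l2))); first by move=> u v; apply: arcs_catl.
elim: m x => [//|y m IH] x /=.
rewrite arcs_head /=.
apply: (@sub_path _ (seq_arcs (y :: m ++ l2))); first by move=> u v; apply: arcs_cons.
exact: IH.
Qed.

Lemma mk2 {V : finType} (VG : pred V) (A : rel V) (b : nat) (q s2 x : V) (R' Q2' : seq V) :
  path A s2 (rcons R' q) -> path A s2 Q2' -> last s2 Q2' = x -> b <= (size R').+1 ->
  uniq (q :: rev (s2 :: R') ++ Q2') -> all VG (q :: rev (s2 :: R') ++ Q2') ->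
  exists (s t : nat -> V) (Q Q' : nat -> seq V),
    [/\ alt_path_in VG A 2 b s t Q Q', t 2 = x, s 1 = q &
        alt_walk 2 Q Q' = q :: rev (s2 :: R') ++ Q2'].
Proof.
move=> pR pQ lQ bR uW aW.
have walkE : alt_walk 2 (fun i => if i == 1 then [:: q] else s2 :: Q2')
    (fun _ => s2 :: rcons R' q) = q :: rev (s2 :: R') ++ Q2'.
  by rewrite /alt_walk /= cats0 rev_cons rev_rcons /= rev_cons.
exists (fun i => if i == 1 then q else s2), (fun i => if i == 1 then q else x),
  (fun i => if i == 1 then [:: q] else s2 :: Q2'), (fun _ => s2 :: rcons R' q).
move: uW; rewrite cons_uniq cat_uniq => /and4P [qn uR hR uQ].
split; [|done|done|exact: walkE].
split => //; last by rewrite [alt_walk _ _ _]walkE cons_uniq cat_uniq qn uR hR uQ aW.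
- move=> i /andP [H1 H2]; have [_|Hi] := eqVneq i 1; first by rewrite /= !eqxx.
  rewrite /=.
  rewrite eqxx pQ lQ eqxx /= uQ andbT.
  apply/negP => Hs; case/negP: hR; apply/hasP; exists s2 => //.
  by rewrite mem_rev mem_head.
- move=> i /andP [H1 H2]; have -> : i = 1 by lia.
  rewrite /= eqxx pR last_rcons eqxx /=.
  rewrite -cons_uniq -rcons_cons rcons_uniq.
  move: qn; rewrite mem_cat negb_or => /andP [qn _].
  by rewrite -mem_rev qn -rev_uniq.
- split; first by move=> i; lia.
  move=> i _; by rewrite /dlength /= size_rcons.
Qed.

Lemma mk1 {V : finType} (VG : pred V) (A : rel V) (b : nat) (p x : V) (Q1' : seq V) :
  path A p Q1' -> last p Q1' = x -> uniq (p :: Q1') -> all VG (p :: Q1') ->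
  exists (s t : nat -> V) (Q Q' : nat -> seq V),
    [/\ alt_path_in VG A 1 b s t Q Q', t 1 = x, s 1 = p &
        alt_walk 1 Q Q' = p :: Q1'].
Proof.
move=> pQ lQ uQ aQ.
exists (fun _ => p), (fun _ => x), (fun _ => p :: Q1'), (fun _ => [::]).
have walkE : alt_walk 1 (fun _ => p :: Q1') (fun _ => [::]) = p :: Q1'.
  by rewrite /alt_walk /= cats0.
split; [|done|done|exact: walkE].
split => //; last by rewrite [alt_walk _ _ _]walkE uQ aQ.
- move=> i _ /=; move: uQ => /= ->; by rewrite eqxx pQ lQ eqxx.
- by move=> i; lia.
- by split => i; lia.
Qed.

Lemma card_set1 {V : finType} (P : pred V) (w : seq V) y : y \in w -> P y ->
  (forall v, v \in w -> P v -> v = y) -> #|[set v in w | P v]| = 1.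
Proof.
move=> Hy Py H.
suff -> : [set v in w | P v] = [set y] by rewrite cards1.
apply/setP => v; rewrite !inE.
apply/andP/eqP => [[H1 H2]|->]; [exact: H | by split].
Qed.

Lemma split_first {V : finType} (P : pred V) s : has P s ->
  exists L x N, [/\ s = L ++ x :: N, P x & ~~ has P L].
Proof.
elim: s => [//|y s IH] /=.
case Py: (P y) => /= H; first by exists [::], y, s.
have [L [x [N [-> Px hL]]]] := IH H.
by exists (y :: L), x, N; rewrite /= Py.
Qed.

Lemma split_last {V : finType} (P : pred V) s : has P s ->
  exists L x N, [/\ s = L ++ x :: N, P x & ~~ has P N].
Proof.
elim: s => [//|y s IH] /=.
case hs: (has P s).
  have [L [x [N [-> Px hL]]]] := IH hs.
  by exists (y :: L), x, N.
rewrite orbF => Py; by exists [::], y, s; rewrite hs.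
Qed.

Lemma uniq_sub {V : finType} (VG : pred V) (U w w' : seq V) : uniq U -> all VG U ->
  perm_eq w w' -> subseq w' U -> uniq w && all VG w.
Proof.
move=> uU aU pw sw.
rewrite (perm_uniq pw) (subseq_uniq sw uU) /=.
apply/allP => v; rewrite (perm_mem pw) => /(mem_subseq sw); exact: (allP aU).
Qed.

Set Implicit Arguments. Unset Strict Implicit. Unset Printing Implicit Defensive.

Lemma split_mem {V : eqType} (x : V) s : x \in s -> exists L N, s = L ++ x :: N.
Proof. by move=> /splitPr [L N]; exists L, N. Qed.

Lemma sub_cons2 {V : eqType} (a : V) s t : subseq s t -> subseq (a :: s) (a :: t).
Proof. by rewrite /= eqxx. Qed.

Lemma sub_consr {V : eqType} (a : V) s t : subseq s t -> subseq s (a :: t).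
Proof. by move=> H; apply: subseq_trans H (subseq_cons t a). Qed.

Lemma sub_catr {V : eqType} (a s t : seq V) : subseq s t -> subseq s (a ++ t).
Proof. by move=> H; apply: subseq_trans H (suffix_subseq a t). Qed.

Lemma sub_cat2 {V : eqType} (a s t : seq V) : subseq s t -> subseq (a ++ s) (a ++ t).
Proof. by move=> H; apply: cat_subseq (subseq_refl a) H. Qed.

Lemma path_rehead {V : eqType} (e : rel V) u w s :
  e w (head u s) -> path e u s -> path e w s.
Proof. by case: s => //= y s -> /andP [_ ->]. Qed.

Lemma pq_only {V : eqType} (w : seq V) p q : p \notin w ->
  forall v, v \in w -> (v == p) || (v == q) -> v = q.
Proof. by move=> pw v vw /orP [/eqP E|/eqP //]; rewrite -E vw in pw. Qed.

Lemma hasF {V : eqType} (P : pred V) L v : ~~ has P L -> v \in L -> P v -> False.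
Proof. by move=> /hasPn H /H /negP. Qed.

Lemma sub_mem {V : eqType} (U w w' : seq V) : perm_eq w w' -> subseq w' U -> {subset w <= U}.
Proof. by move=> pw sw v; rewrite (perm_mem pw) => /(mem_subseq sw). Qed.

Lemma part2 {V : finType} (b : nat) (p q r f : V) (P2' M : seq V) (ex : rel V) :
  last f P2' = r ->
  uniq (r :: rcons M p) -> uniq (f :: P2') ->
  q \notin r :: rcons M p -> q \notin f :: P2' ->
  (forall v, v \in r :: rcons M p -> v \in f :: P2' -> v = r) ->
  b <= size P2' ->
  (exists x y, ex x y) ->
  (forall x y, ex x y -> (x = f /\ y = nth r (r :: rcons M p) 1) \/
        ((x \in r :: rcons M p) /\ x <> r /\ y = f)) ->
  (forall X : {set V}, X != set0 ->
     (forall v, v \in X -> [/\ v \in r :: rcons M p, v != p & v != r]) ->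
     exists a, (a = 1 \/ a = 2) /\
     exists (s t : nat -> V) (Q Q' : nat -> seq V),
       [/\ alt_path_in (gadgetV q (r :: rcons M p) (f :: P2'))
             (gadgetA q (r :: rcons M p) (f :: P2') ex) a b s t Q Q',
           t a \in X,
           (s 1 == p) || (s 1 == q),
           #|[set v in alt_walk a Q Q' | (v == p) || (v == q)]| = 1 &
           #|[set v in alt_walk a Q Q' | v \in X]| = 1]).
Proof.
move=> lP2 uP1 uP2 qP1 qP2 int bP2 [x0 [y0 e0]] exK X X0 XH.
set Ar := gadgetA _ _ _ ex; set VG := gadgetV _ _ _.
have hA1 : forall l1 x m l2, r :: rcons M p = l1 ++ x :: m ++ l2 -> path Ar x m.
  move=> l1 x m l2 E; apply: (@sub_path _ (seq_arcs (r :: rcons M p))).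
    by move=> u v H; rewrite /Ar /gadgetA H.
  by rewrite E; apply: arcs_sub.
have hA2 : forall l1 x m l2, f :: P2' = l1 ++ x :: m ++ l2 -> path Ar x m.
  move=> l1 x m l2 E; apply: (@sub_path _ (seq_arcs (f :: P2'))).
    by move=> u v H; rewrite /Ar /gadgetA H orbT.
  by rewrite E; apply: arcs_sub.
have hAq : forall v, v \in r :: rcons M p -> Ar v q.
  by move=> v H; rewrite /Ar /gadgetA H eqxx !orbT.
have hAe : forall x y, ex x y -> Ar x y.
  by move=> x y H; rewrite /Ar /gadgetA H !orbT.
have uU : uniq (rcons (q :: (f :: P2') ++ M) p).
  rewrite rcons_cons rcons_cat.
  have /andP [rM uM] : (r \notin rcons M p) && uniq (rcons M p) by rewrite -cons_uniq.
  have qM : q \notin rcons M p by move: qP1; rewrite in_cons negb_or => /andP [].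
  rewrite cons_uniq mem_cat negb_or qP2 qM cat_uniq uP2 uM andbT /=.
  rewrite andbT; apply/hasPn => v Hv; apply/negP => H2.
  have E : v = r by apply: int => //; rewrite in_cons Hv orbT.
  by rewrite -E Hv in rM.
have aU : all VG (q :: (f :: P2') ++ M).
  apply/allP => v; rewrite in_cons mem_cat => /or3P [/eqP ->|H|H];
    rewrite /VG /gadgetV ?eqxx ?H ?orbT //.
  by rewrite in_cons mem_rcons in_cons H !orbT.
have aUp : all VG (rcons (q :: (f :: P2') ++ M) p).
  by rewrite all_rcons aU andbT /VG /gadgetV in_cons mem_rcons mem_head orbT.
have uUp := uU.
move: uU; rewrite rcons_uniq => /andP [pU uU].
have qU2 : q \notin rcons ((f :: P2') ++ M) p by move: uUp; rewrite rcons_cons cons_uniq => /andP [].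
have pR : path Ar f (rcons P2' q).
  rewrite rcons_path lP2 hAq ?mem_head // andbT.
  by apply: (hA2 [::] f P2' [::]); rewrite cats0.
have XM : forall v, v \in X -> v \in M.
  move=> v /XH [H1 H2 H3]; move: H1; rewrite in_cons mem_rcons in_cons.
  by rewrite (negbTE H2) (negbTE H3).
have XP2 : forall v, v \in X -> v \notin f :: P2'.
  move=> v Hv; move: (XH v Hv) => [H1 _ H3]; apply/negP => H2.
  by rewrite (int v H1 H2) eqxx in H3.
have Xq : q \notin X.
  by apply/negP => /XH [H _ _]; rewrite H in qP1.
have hasXM : has (mem X) M.
  case/set0Pn: X0 => v Hv; apply/hasP; exists v => //; exact: XM.
have [pq pP2 pM] : [/\ p != q, p \notin f :: P2' & p \notin M] by apply/and3P; move: pU; rewrite in_cons mem_cat !negb_or.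
case: (exK _ _ e0) => [[Ex0 Ey0]|[Hx0 [Hx0r Ey0]]].
-
  subst x0 y0.
  have [L [x [N [EM Xx hL]]]] := split_first hasXM.
  subst M.
  have nthE : nth r (r :: rcons (L ++ x :: N) p) 1 = head r (rcons L x) by case: (L).
  have pQ : path Ar f (rcons L x).
    apply: (@path_rehead _ _ r); first by rewrite -nthE; exact: hAe.
    by apply: (hA1 [::] r (rcons L x) (N ++ [:: p])); rewrite /= cat_rcons -cats1 -catA.
  set W := q :: rev (f :: P2') ++ rcons L x.
  set W' := q :: (f :: P2') ++ L ++ [:: x].
  have pW : perm_eq W W'.
    by rewrite perm_cons -cats1; apply: perm_cat => //; rewrite perm_rev.
  have sW : subseq W' (q :: (f :: P2') ++ L ++ x :: N).
    by apply: sub_cons2; apply: sub_cat2; apply: sub_cat2; rewrite /= eqxx sub0seq.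
  case/andP: (uniq_sub uU aU pW sW) => uW aW.
  have pWn : p \notin W by apply/negP => /(sub_mem pW sW); apply/negP.
  have [s [t [Q [Q' [HR Ht Hs HW]]]]] :=
    @mk2 _ VG Ar b q f x P2' (rcons L x) pR pQ (last_rcons _ _ _) (leqW bP2) uW aW.
  exists 2; split; first by right.
  exists s, t, Q, Q'; split => //.
  + by rewrite Ht.
  + by rewrite Hs eqxx orbT.
  + rewrite HW; apply: (@card_set1 _ (fun v => (v == p) || (v == q)) _ q) => //=.
        by rewrite mem_head. by rewrite eqxx orbT.
    exact: pq_only.
  + rewrite HW; apply: (@card_set1 _ (fun v => v \in X) _ x) => //=.
      by rewrite in_cons mem_cat mem_rcons mem_head !orbT.
    move=> v Hv Xv; move: Hv.
    have vq : v != q by apply: contraNneq Xq => <-.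
    rewrite in_cons (negbTE vq) /= mem_cat mem_rev mem_rcons in_cons.
    case/or3P => [vP|/eqP //|vL]; [by move: (XP2 _ Xv); rewrite vP | case: (hasF hL vL Xv)].
subst y0.
have : x0 \in p :: M by move: Hx0; rewrite in_cons mem_rcons => /orP [/eqP//|].
rewrite in_cons => /orP [/eqP Ex0|x0M].
-
  subst x0.
  have [L [x [N [EM Xx hL]]]] := split_first hasXM.
  subst M.
  set W := p :: (f :: P2') ++ rcons L x.
  have pQ : path Ar p ((f :: P2') ++ rcons L x).
    rewrite /= (hAe _ _ e0) /= cat_path lP2 (hA2 [::] f P2' [::]) ?cats0 //=.
    by apply: (hA1 [::] r (rcons L x) (N ++ [:: p])); rewrite /= cat_rcons -cats1 -catA.
  have lQ : last p ((f :: P2') ++ rcons L x) = x by rewrite last_cat last_rcons.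
  set W' := rcons ((f :: P2') ++ L ++ [:: x]) p.
  have pW : perm_eq W W'.
    by rewrite perm_sym perm_rcons perm_cons cats1 perm_refl.
  have sW : subseq W' (rcons ((f :: P2') ++ L ++ x :: N) p).
    rewrite /W' -!cats1; apply: cat_subseq (subseq_refl _).
    by apply: sub_cat2; apply: sub_cat2; rewrite /= eqxx sub0seq.
  have sW2 : subseq W' (rcons (q :: (f :: P2') ++ L ++ x :: N) p).
    by apply: (subseq_trans sW); rewrite rcons_cons; apply: subseq_cons.
  case/andP: (uniq_sub uUp aUp pW sW2) => uW aW.
  have qWn : q \notin W by apply/negP => /(sub_mem pW sW); apply/negP.
  have [s [t [Q [Q' [HR Ht Hs HW]]]]] := @mk1 _ VG Ar b p x _ pQ lQ uW aW.
  exists 1; split; first by left.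
  exists s, t, Q, Q'; split => //.
  + by rewrite Ht.
  + by rewrite Hs eqxx.
  + rewrite HW; apply: (@card_set1 _ (fun v => (v == p) || (v == q)) _ p) => //=.
      by rewrite mem_head. by rewrite eqxx.
    move=> v vW /orP [/eqP //|/eqP E]; by rewrite -E vW in qWn.
  + rewrite HW; apply: (@card_set1 _ (fun v => v \in X) _ x) => //=.
      by rewrite !in_cons mem_cat mem_rcons mem_head !orbT.
    move=> v Hv Xv; move: Hv.
    have [_ vp _] := XH v Xv.
    rewrite in_cons (negbTE vp) /= -cat_cons mem_cat mem_rcons in_cons.
    case/or3P => [vP|/eqP //|vL]; [by move: (XP2 _ Xv); rewrite vP | case: (hasF hL vL Xv)].
have [A0 [B EM]] := split_mem x0M.
subst M.
have pRv : path Ar x0 (rcons (f :: P2') q) by rewrite /= (hAe _ _ e0) pR.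
case x0X : (x0 \in X).
- idtac.
  + idtac.
    set W := q :: rev (x0 :: f :: P2') ++ [::].
    set W' := q :: (f :: P2') ++ [:: x0].
    have pW : perm_eq W W'.
      by rewrite /W /W' cats0 perm_cons rev_cons -cats1; apply: perm_cat => //; rewrite perm_rev.
    have sW : subseq W' (q :: (f :: P2') ++ A0 ++ x0 :: B).
      by apply: sub_cons2; apply: sub_cat2; apply: sub_catr; rewrite /= eqxx sub0seq.
    case/andP: (uniq_sub uU aU pW sW) => uW aW.
    have pWn : p \notin W by apply/negP => /(sub_mem pW sW); apply/negP.
    have [s [t [Q [Q' [HR Ht Hs HW]]]]] :=
      @mk2 _ VG Ar b q x0 x0 (f :: P2') [::] pRv erefl erefl (leqW (leqW bP2)) uW aW.
    exists 2; split; first by right.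
    exists s, t, Q, Q'; split => //.
    * by rewrite Ht.
    * by rewrite Hs eqxx orbT.
    * rewrite HW; apply: (@card_set1 _ (fun v => (v == p) || (v == q)) _ q) => //=.
        by rewrite mem_head. by rewrite eqxx orbT.
      exact: pq_only.
    * rewrite HW; apply: (@card_set1 _ (fun v => v \in X) _ x0) => //=.
        by rewrite in_cons cats0 mem_rev mem_head orbT.
      move=> v Hv Xv; move: Hv.
      have vq : v != q by apply: contraNneq Xq => <-.
      rewrite in_cons (negbTE vq) /= cats0 mem_rev in_cons.
      case/orP => [/eqP //|vP]; by move: (XP2 _ Xv); rewrite vP.
case hB : (has (mem X) B).
-
  have [L [x [N [EB Xx hL]]]] := split_first hB.
  subst B.
  have pQ : path Ar x0 (rcons L x).
    apply: (hA1 (r :: A0) x0 (rcons L x) (N ++ [:: p])).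
    by rewrite cat_rcons -cats1 /= -!catA /= -!catA.
  set W := q :: rev (x0 :: f :: P2') ++ rcons L x.
  set W' := q :: (f :: P2') ++ x0 :: L ++ [:: x].
  have pW : perm_eq W W'.
    rewrite /W /W' perm_cons rev_cons cat_rcons -cats1.
    by apply: perm_cat => //; rewrite perm_rev.
  have sW : subseq W' (q :: (f :: P2') ++ A0 ++ x0 :: L ++ x :: N).
    apply: sub_cons2; apply: sub_cat2; apply: sub_catr; apply: sub_cons2; apply: sub_cat2.
    by rewrite /= eqxx sub0seq.
  case/andP: (uniq_sub uU aU pW sW) => uW aW.
  have pWn : p \notin W by apply/negP => /(sub_mem pW sW); apply/negP.
  have [s [t [Q [Q' [HR Ht Hs HW]]]]] :=
    @mk2 _ VG Ar b q x0 x (f :: P2') (rcons L x) pRv pQ (last_rcons _ _ _) (leqW (leqW bP2)) uW aW.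
  exists 2; split; first by right.
  exists s, t, Q, Q'; split => //.
  + by rewrite Ht.
  + by rewrite Hs eqxx orbT.
  + rewrite HW; apply: (@card_set1 _ (fun v => (v == p) || (v == q)) _ q) => //=.
      by rewrite mem_head. by rewrite eqxx orbT.
    exact: pq_only.
  + rewrite HW; apply: (@card_set1 _ (fun v => v \in X) _ x) => //=.
      by rewrite in_cons mem_cat mem_rcons mem_head !orbT.
    move=> v Hv Xv; move: Hv.
    have vq : v != q by apply: contraNneq Xq => <-.
    rewrite in_cons (negbTE vq) /= mem_cat mem_rev in_cons mem_rcons in_cons.
    case/or3P => [/orP [/eqP E|vP]|/eqP //|vL].
    * by rewrite E x0X in Xv.
    * by move: (XP2 _ Xv); rewrite vP.
    * case: (hasF hL vL Xv).
-
  have hA : has (mem X) A0 by move: hasXM; rewrite has_cat /= x0X hB /= !orbF.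
  have [L [x [N [EA Xx hN]]]] := split_last hA.
  subst A0.
  have pR' : path Ar x (rcons (N ++ x0 :: f :: P2') q).
    rewrite rcons_cat -cat_rcons cat_path last_rcons pRv andbT.
    apply: (hA1 (r :: L) x (rcons N x0) (B ++ [:: p])).
    by rewrite cat_rcons -cats1 -!catA.
  set W := q :: rev (x :: N ++ x0 :: f :: P2') ++ [::].
  set W' := q :: (f :: P2') ++ x :: N ++ [:: x0].
  have pW : perm_eq W W'.
    rewrite /W /W' cats0 perm_cons perm_rev.
    have -> : x :: N ++ x0 :: f :: P2' = (x :: N ++ [:: x0]) ++ f :: P2' by rewrite /= -catA.
    by rewrite perm_catC.
  have sW : subseq W' (q :: (f :: P2') ++ (L ++ x :: N) ++ x0 :: B).
    apply: sub_cons2; apply: sub_cat2; rewrite -catA; apply: sub_catr; apply: sub_cons2; apply: sub_cat2.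
    by rewrite /= eqxx sub0seq.
  case/andP: (uniq_sub uU aU pW sW) => uW aW.
  have pWn : p \notin W by apply/negP => /(sub_mem pW sW); apply/negP.
  have bR : b <= (size (N ++ x0 :: f :: P2')).+1 by move: bP2; rewrite size_cat /= => H; clear -H; lia.
  have [s [t [Q [Q' [HR Ht Hs HW]]]]] :=
    @mk2 _ VG Ar b q x x (N ++ x0 :: f :: P2') [::] pR' erefl erefl bR uW aW.
  exists 2; split; first by right.
  exists s, t, Q, Q'; split => //.
  + by rewrite Ht.
  + by rewrite Hs eqxx orbT.
  + rewrite HW; apply: (@card_set1 _ (fun v => (v == p) || (v == q)) _ q) => //=.
      by rewrite mem_head. by rewrite eqxx orbT.
    exact: pq_only.
  + rewrite HW; apply: (@card_set1 _ (fun v => v \in X) _ x) => //=.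
      by rewrite in_cons cats0 mem_rev mem_head orbT.
    move=> v Hv Xv; move: Hv.
    have vq : v != q by apply: contraNneq Xq => <-.
    rewrite in_cons (negbTE vq) /= cats0 mem_rev in_cons mem_cat in_cons.
    case/or4P => [/eqP //|vN|/eqP E|vP].
    * case: (hasF hN vN Xv).
    * by rewrite E x0X in Xv.
    * by move: (XP2 _ Xv); rewrite vP.
Qed.

Lemma part1 {V : finType} (b : nat) (p q r f : V) (P2' M : seq V) (ex : rel V) :
  last f P2' = r ->
  uniq (r :: rcons M p) -> uniq (f :: P2') ->
  q \notin r :: rcons M p -> q \notin f :: P2' ->
  (forall v, v \in r :: rcons M p -> v \in f :: P2' -> v = r) ->
  b <= size P2' -> b <= (size M).+1 ->
  (exists x y, ex x y) ->
  (forall x y, ex x y -> (x = f /\ y = nth r (r :: rcons M p) 1) \/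
        ((x \in r :: rcons M p) /\ x <> r /\ y = f)) ->
  (forall x, gadgetV q (r :: rcons M p) (f :: P2') x -> x != p -> x != q ->
     exists a, (a = 1 \/ a = 2) /\
     exists (s t : nat -> V) (Q Q' : nat -> seq V),
       [/\ alt_path_in (gadgetV q (r :: rcons M p) (f :: P2'))
             (gadgetA q (r :: rcons M p) (f :: P2') ex) a b s t Q Q',
           t a = x,
           (s 1 == p) || (s 1 == q) &
           #|[set v in alt_walk a Q Q' | (v == p) || (v == q)]| = 1]).
Proof.
move=> lP2 uP1 uP2 qP1 qP2 int bP2 bP1 exE exK x Hx xp xq.
have P2x : x \in f :: P2' -> exists a, (a = 1 \/ a = 2) /\
     exists (s t : nat -> V) (Q Q' : nat -> seq V),
       [/\ alt_path_in (gadgetV q (r :: rcons M p) (f :: P2'))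
             (gadgetA q (r :: rcons M p) (f :: P2') ex) a b s t Q Q',
           t a = x,
           (s 1 == p) || (s 1 == q) &
           #|[set v in alt_walk a Q Q' | (v == p) || (v == q)]| = 1].
  move=> xP2.
  set Ar := gadgetA _ _ _ ex; set VG := gadgetV _ _ _.
  have hA1 : forall l1 x m l2, r :: rcons M p = l1 ++ x :: m ++ l2 -> path Ar x m.
    move=> l1 z m l2 E; apply: (@sub_path _ (seq_arcs (r :: rcons M p))).
      by move=> u v H; rewrite /Ar /gadgetA H.
    by rewrite E; apply: arcs_sub.
  have hA2 : forall l1 x m l2, f :: P2' = l1 ++ x :: m ++ l2 -> path Ar x m.
    move=> l1 z m l2 E; apply: (@sub_path _ (seq_arcs (f :: P2'))).
      by move=> u v H; rewrite /Ar /gadgetA H orbT.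
    by rewrite E; apply: arcs_sub.
  have hAq : forall v, v \in r :: rcons M p -> Ar v q.
    by move=> v H; rewrite /Ar /gadgetA H eqxx !orbT.
  have hAe : forall x y, ex x y -> Ar x y.
    by move=> z y H; rewrite /Ar /gadgetA H !orbT.
  have uU : uniq (rcons (q :: (f :: P2') ++ M) p).
    rewrite rcons_cons rcons_cat.
    have /andP [rM uM] : (r \notin rcons M p) && uniq (rcons M p) by rewrite -cons_uniq.
    have qM : q \notin rcons M p by move: qP1; rewrite in_cons negb_or => /andP [].
    rewrite cons_uniq mem_cat negb_or qP2 qM cat_uniq uP2 uM andbT /=.
    rewrite andbT; apply/hasPn => v Hv; apply/negP => H2.
    have E : v = r by apply: int => //; rewrite in_cons Hv orbT.
    by rewrite -E Hv in rM.
  have aU : all VG (q :: (f :: P2') ++ M).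
    apply/allP => v; rewrite in_cons mem_cat => /or3P [/eqP ->|H|H];
      rewrite /VG /gadgetV ?eqxx ?H ?orbT //.
    by rewrite in_cons mem_rcons in_cons H !orbT.
  have aUp : all VG (rcons (q :: (f :: P2') ++ M) p).
    by rewrite all_rcons aU andbT /VG /gadgetV in_cons mem_rcons mem_head orbT.
  have uUp := uU.
  move: uU; rewrite rcons_uniq => /andP [pU uU].
  have qU2 : q \notin rcons ((f :: P2') ++ M) p by move: uUp; rewrite rcons_cons cons_uniq => /andP [].
  have pR : path Ar f (rcons P2' q).
    rewrite rcons_path lP2 hAq ?mem_head // andbT.
    by apply: (hA2 [::] f P2' [::]); rewrite cats0.
  have [L [N EL]] := split_mem xP2.
  have lxN : last x N = r.
    by rewrite -lP2 -[last f P2']/(last x (f :: P2')) EL last_cat.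
  have pR' : path Ar x (rcons (N ++ M) q).
    rewrite rcons_cat cat_path lxN rcons_path.
    rewrite (hA2 L x N [::]) ?cats0 //= (hA1 [::] r M [:: p]) ?cats1 //= hAq //.
    by move: (mem_last r M); rewrite !in_cons mem_rcons in_cons => /orP [->|->]; rewrite ?orbT.
  set W := q :: rev (x :: N ++ M) ++ [::].
  set W' := q :: (x :: N) ++ M.
  have pW : perm_eq W W' by rewrite /W /W' cats0 perm_cons perm_rev.
  have sW : subseq W' (q :: (f :: P2') ++ M).
    by rewrite EL; apply: sub_cons2; rewrite -catA; apply: sub_catr.
  case/andP: (uniq_sub uU aU pW sW) => uW aW.
  have pWn : p \notin W by apply/negP => /(sub_mem pW sW); apply/negP.
  have bR : b <= (size (N ++ M)).+1.
    by move: bP1; rewrite size_cat => H; apply: (leq_trans H); rewrite ltnS leq_addl.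
  have [s [t [Q [Q' [HR Ht Hs HW]]]]] :=
    @mk2 _ VG Ar b q x x (N ++ M) [::] pR' erefl erefl bR uW aW.
  exists 2; split; first by right.
  exists s, t, Q, Q'; split => //.
  + by rewrite Hs eqxx orbT.
  + rewrite HW; apply: (@card_set1 _ (fun v => (v == p) || (v == q)) _ q) => //=.
      by rewrite mem_head. by rewrite eqxx orbT.
    exact: pq_only.
case xP2 : (x \in f :: P2'); first exact: P2x.
have xP1 : x \in r :: rcons M p.
  by move: Hx; rewrite /gadgetV xP2 (negbTE xq) !orbF.
have xr : x != r.
  apply: contraFneq xP2 => ->; rewrite -lP2; exact: mem_last.
have X0 : [set x] != set0 by apply/set0Pn; exists x; rewrite set11.
have XH : forall v, v \in [set x] -> [/\ v \in r :: rcons M p, v != p & v != r].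
  by move=> v /set1P ->.
have [a [Ha [s [t [Q [Q' [HR Ht Hs Hc _]]]]]]] :=
  part2 lP2 uP1 uP2 qP1 qP2 int bP2 exE exK X0 XH.
exists a; split => //; exists s, t, Q, Q'; split => //.
by apply/set1P.
Qed.

Unset Implicit Arguments.

Theorem lemma2p5 (V : finType) (b : nat) (p q r : V) (P1 P2 : seq V)
  (ex : rel V) :
  1 <= b ->
  ext_gadget_II b p q r P1 P2 ex ->
  (forall x, gadgetV q P1 P2 x -> x != p -> x != q ->
     exists a, (a = 1 \/ a = 2) /\
     exists (s t : nat -> V) (Q Q' : nat -> seq V),
       [/\ alt_path_in (gadgetV q P1 P2) (gadgetA q P1 P2 ex) a b s t Q Q',
           t a = x,
           (s 1 == p) || (s 1 == q) &
           #|[set v in alt_walk a Q Q' | (v == p) || (v == q)]| = 1])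
  /\
  (forall X : {set V}, X != set0 ->
     (forall v, v \in X -> [/\ v \in P1, v != p & v != r]) ->
     exists a, (a = 1 \/ a = 2) /\
     exists (s t : nat -> V) (Q Q' : nat -> seq V),
       [/\ alt_path_in (gadgetV q P1 P2) (gadgetA q P1 P2 ex) a b s t Q Q',
           t a \in X,
           (s 1 == p) || (s 1 == q),
           #|[set v in alt_walk a Q Q' | (v == p) || (v == q)]| = 1 &
           #|[set v in alt_walk a Q Q' | v \in X]| = 1]).
Proof.
move=> b1 [[dP1 lenP1 qP1] [f dP2 bP2] Hint qP2 [exE exK]].
have b2 : 1 <= b ^ 2 by rewrite expn_gt0 b1.
case: P1 dP1 lenP1 qP1 Hint exK => [//|r0 s]; rewrite /dpath_ft /dpath_in.
move=> /and4P [/eqP Er0 _ /eqP ls us] lenP1 qP1 Hint exK; subst r0.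
case/lastP: s ls us lenP1 qP1 Hint exK => [|M p'].
  by rewrite /dlength /= => _ _ H; exfalso; move: H; clear -b1 b2; lia.
rewrite last_rcons => Ep; subst p' => uP1 lenP1 qP1 Hint exK.
case: P2 dP2 bP2 qP2 Hint exK => [//|f' P2']; rewrite /dpath_ft /dpath_in.
move=> /and4P [/eqP Ef _ /eqP lP2 uP2] bP2 qP2 Hint exK; subst f'.
have int : forall v, v \in r :: rcons M p -> v \in f :: P2' -> v = r.
  move=> v H1 H2; move: (Hint v); rewrite inE /= H1 H2 /= => /esym/eqP. done.
have bP1 : b <= (size M).+1.
  move: lenP1; rewrite /dlength /= size_rcons => H; clear -H b1 b2; lia.
split.
- exact: (part1 lP2 uP1 uP2 qP1 qP2 int bP2 bP1 exE exK).
- exact: (part2 lP2 uP1 uP2 qP1 qP2 int bP2 exE exK).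
Qed.
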